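(* Let $X$ be a space with $|X|<\mathfrak{d}$ and let $\mathcal{K}$ be a family of subsets of $X$ that is closed under finite unions. Then: (1) if $X$ is Star-$\sigma\mathcal{K}$, then $X$ satisfies $SS^*_{\mathcal{K}}(\mathcal{O},\mathcal{O})$; (2) if $X$ is absolutely Star-$\sigma\mathcal{K}$, then $X$ satisfies $selSS^*_{\mathcal{K}}(\mathcal{O},\mathcal{O})$.
   Context: All spaces are regular. For $A\subseteq X$ and a family $\mathcal{U}$ of subsets of $X$, $St(A,\mathcal{U})=\bigcup\{U\in\mathcal{U}:U\cap A\neq\emptyset\}$. $\mathfrak{d}$ is the least cardinality of a family $F\subseteq\omega^\omega$ such that every $g\in\omega^\omega$ satisfies $g\le^* f$ for some $f\in F$ ($\le^*$ = eventual domination). $X$ is Star-$\sigma\mathcal{K}$ if for every open cover $\mathcal{U}$ of $X$ there is $K\subseteq X$ which is a countable union of members of $\mathcal{K}$ with $St(K,\mathcal{U})=X$. $X$ is absolutely Star-$\sigma\mathcal{K}$ if for every dense $D\subseteq X$ and every open cover $\mathcal{U}$ there is $K\subseteq D$ which is a countable union of members of $\mathcal{K}$ (each contained in $D$) with $St(K,\mathcal{U})=X$. $SS^*_{\mathcal{K}}(\mathcal{O},\mathcal{O})$: for every sequence $(\mathcal{U}_n:n\in\omega)$ of open covers of $X$ there are $K_n\in\mathcal{K}$ ($n\in\omega$) such that $\{St(K_n,\mathcal{U}_n):n\in\omega\}$ covers $X$. $selSS^*_{\mathcal{K}}(\mathcal{O},\mathcal{O})$: for every sequence $(\mathcal{U}_n:n\in\omega)$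 of open covers and every sequence $(D_n:n\in\omega)$ of dense subsets of $X$ there are $K_n\in\mathcal{K}$ with $K_n\subseteq D_n$ such that $\{St(K_n,\mathcal{U}_n):n\in\omega\}$ covers $X$. *)

(* Defs.v *)
From mathcomp Require Import all_boot all_order.
From mathcomp Require Import all_classical all_reals all_analysis.
Set Implicit Arguments. Unset Strict Implicit. Unset Printing Implicit Defensive.
Local Open Scope classical_set_scope.

Definition eventually_le (f g : nat -> nat) : Prop :=
  exists N, forall n, (N <= n)%N -> (f n <= g n)%N.

Definition dominating (F : set (nat -> nat)) : Prop :=
  forall g, exists2 f, F f & eventually_le g f.

(* |A| < d : no dominating family has cardinality <= |A| (d is the least
   cardinality of a dominating family). *)
Definition card_lt_dfrak (T : Type) (A : set T) : Prop :=
  forall F : set (nat -> nat), dominating F -> ~ (F #<= A)%card.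

Section Star.
Context {X : topologicalType}.

Definition St (A : set X) (U : set (set X)) : set X :=
  \bigcup_(V in [set V | U V /\ V `&` A !=set0]) V.

Definition open_cover (U : set (set X)) : Prop :=
  (forall V, U V -> open V) /\ \bigcup_(V in U) V = setT.

Definition finite_union_closed (K : set (set X)) : Prop :=
  forall A B, K A -> K B -> K (A `|` B).

(* Star-sigma-K: the countable union is given as a sequence of members of K *)
Definition star_sigma (K : set (set X)) : Prop :=
  forall U, open_cover U ->
    exists Kn : nat -> set X, (forall n, K (Kn n)) /\
      St (\bigcup_n Kn n) U = setT.

Definition abs_star_sigma (K : set (set X)) : Prop :=
  forall (D : set X) U, dense D -> open_cover U ->
    exists Kn : nat -> set X, (forall n, K (Kn n) /\ Kn n `<=` D) /\
      St (\bigcup_n Kn n) U = setT.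

Definition SS_star (K : set (set X)) : Prop :=
  forall U : nat -> set (set X), (forall n, open_cover (U n)) ->
    exists Kn : nat -> set X, (forall n, K (Kn n)) /\
      \bigcup_n St (Kn n) (U n) = setT.

Definition selSS_star (K : set (set X)) : Prop :=
  forall (U : nat -> set (set X)) (D : nat -> set X),
    (forall n, open_cover (U n)) -> (forall n, dense (D n)) ->
    exists Kn : nat -> set X, (forall n, K (Kn n) /\ Kn n `<=` D n) /\
      \bigcup_n St (Kn n) (U n) = setT.
End Star.

(* Main.v *)
Require Import Defs.
From mathcomp Require Import all_boot all_order.
From mathcomp Require Import all_classical all_reals all_analysis.
Local Open Scope classical_set_scope.

Fixpoint accu {X : Type} (h : nat -> set X) (k : nat) : set X :=
  match k with 0 => h 0%N | S k => accu h k `|` h k.+1 end.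

Lemma accu_K (X : topologicalType) (K : set (set X)) h k :
  finite_union_closed K -> (forall i, K (h i)) -> K (accu h k).
Proof. move=> fu hK; elim: k => [|k IH] //=; exact: fu. Qed.

Lemma accu_sub {X : Type} (h : nat -> set X) k i : (i <= k)%N -> h i `<=` accu h k.
Proof.
elim: k => [|k IH] /=; first by rewrite leqn0 => /eqP ->.
rewrite leq_eqVlt => /orP [/eqP -> | Hi]; first by move=> x; right.
by move=> x /(IH Hi) ?; left.
Qed.

Lemma accu_D {X : Type} (h : nat -> set X) (D : set X) k :
  (forall i, h i `<=` D) -> accu h k `<=` D.
Proof. move=> hD; elim: k => [|k IH] /= x; first exact: hD.
by case; [apply: IH| apply: hD]. Qed.

Lemma St_mono (X : topologicalType) (A B : set X) U : A `<=` B -> St A U `<=` St B U.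
Proof.
move=> AB x [V [UV [y [Vy Ay]]] Vx]; exists V => //; split => //; exists y; split => //.
exact: AB.
Qed.

Lemma key (X : topologicalType) (K : set (set X)) (U : nat -> set (set X))
  (KK : nat -> nat -> set X) :
  card_lt_dfrak [set: X] -> finite_union_closed K ->
  (forall n m, K (KK n m)) ->
  (forall n, St (\bigcup_m KK n m) (U n) = setT) ->
  exists g : nat -> nat, \bigcup_n St (accu (KK n) (g n)) (U n) = setT.
Proof.
move=> cd fu KKK HS.
have ex : forall x : X, forall n, exists m, St (KK n m) (U n) x.
  move=> x n; have : St (\bigcup_m KK n m) (U n) x by rewrite HS.
  move=> [V [UV [y [Vy [m _ Ky]]]] Vx]; exists m; exists V => //; split => //.
  by exists y.
have ex2 : forall x : X, exists f : nat -> nat, forall n, St (KK n (f n)) (U n) x.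
  by move=> x; have [f Hf] := choice (ex x); exists f.
have [f Hf] := choice ex2.
have : ~ dominating (f @` setT).
  move=> D; apply: (cd _ D); exact: card_image_le.
move=> ND.
have [g Hg] : exists g, forall x, ~ eventually_le g (f x).
  apply: contrapT => Hn; apply: ND => g.
  apply: contrapT => Hg; apply: Hn; exists g => x Hle; apply: Hg.
  by exists (f x) => //; exists x.
exists g; apply/seteqP; split => // x _.
have [n Hn] : exists n, (f x n < g n)%N.
  apply: contrapT => Hn; apply: (Hg x); exists 0%N => n _.
  by rewrite leqNgt; apply/negP => H; apply: Hn; exists n.
exists n => //.
apply: (@St_mono X _ _ (U n) (accu_sub (KK n) _ _ (ltnW Hn))); exact: Hf.
Qed.

Theorem mainTheorem1 (X : topologicalType) (K : set (set X)) :
  regular_space X ->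
  card_lt_dfrak [set: X] ->
  finite_union_closed K ->
  (star_sigma K -> SS_star K) /\ (abs_star_sigma K -> selSS_star K).
Proof.
move=> _ cd fu; split.
- move=> ss U HU.
  have [KK HKK] := choice (fun n => ss (U n) (HU n)).
  have [g Hg] := @key X K U KK cd fu (fun n m => (HKK n).1 m) (fun n => (HKK n).2).
  exists (fun n => accu (KK n) (g n)); split => // n.
  apply: accu_K => // i; exact: (HKK n).1.
- move=> ss U D HU HD.
  have [KK HKK] := choice (fun n => ss (D n) (U n) (HD n) (HU n)).
  have [g Hg] := @key X K U KK cd fu (fun n m => ((HKK n).1 m).1) (fun n => (HKK n).2).
  exists (fun n => accu (KK n) (g n)); split => // n; split.
    apply: accu_K => // i; exact: ((HKK n).1 i).1.
  apply: accu_D => i; exact: ((HKK n).1 i).2.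
Qed.
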